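(* Let $0<p<1$, $q=1-p$, let $\{X_i,i\geq 1\}$ be independent with $P\{X_i=1\}=p$, $P\{X_i=0\}=q$, and write $\lambda=1/\sqrt{pq}$. Let $\varepsilon>0$. Then for almost all $\omega$ there exists a finite $N_0=N_0(\omega,\varepsilon)$ such that for all $N\geq N_0$, $$M_N\geq \left\lfloor \log_{\lambda} N-\log_{\lambda}\log_{\lambda}\log_{\lambda} N+\log_{\lambda}\log_{\lambda} e-\log_{\lambda}2- 1- \varepsilon\right\rfloor .$$
   Context: For $m,n\in\mathbb N$ let $S_n^{(m)}:=\sum_{i=m+1}^{n+m-1}\big[(1-X_{i-1})X_i+X_{i-1}(1-X_i)\big]$ be the number of switches among $X_m,\ldots,X_{m+n-1}$. For $m,N\in\mathbb N$ and $n=1,\ldots,N$ let $H_{m,n}^{(N)}:=\bigcup_{i=m}^{m+N-n+1}\{S_n^{(i)}=n-1\}$, and $M_N^{(m)}:=\max_{1\leq n\leq N}\{n-1 : H_{m,n}^{(N)}\neq\emptyset\}$ (length of the longest consecutive switches in $X_m,\ldots,X_{m+N-1}$). Write $M_N:=M_N^{(1)}$. *)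

(* Defs.v *)
From HB Require Import structures.
From mathcomp Require Import all_boot all_order all_algebra.
From mathcomp Require Import all_classical all_reals all_analysis.
Set Implicit Arguments. Unset Strict Implicit. Unset Printing Implicit Defensive.
Import Order.TTheory GRing.Theory Num.Theory.
Local Open Scope classical_set_scope.
Local Open Scope ring_scope.

Definition mutually_independent_rvs {d} {T : measurableType d} {R : realType}
  (P : probability T R) (X : nat -> T -> R) : Prop :=
  forall (s : seq nat) (B : nat -> set R),
    uniq s -> all (fun i => 0 < i)%N s ->
    (forall i, measurable (B i)) ->
    P (\bigcap_(i in [set` s]) (X i @^-1` B i)) =
    (\prod_(i <- s) P (X i @^-1` B i))%E.

Definition switches {T : Type} {R : realType} (X : nat -> T -> R)
  (n m : nat) (w : T) : R :=
  \sum_(m.+1 <= i < n + m)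
     ((1 - X i.-1 w) * X i w + X i.-1 w * (1 - X i w)).

Definition inH {T : Type} {R : realType} (X : nat -> T -> R)
  (m n N : nat) (w : T) : bool :=
  has (fun i => switches X n i w == (n.-1)%:R) (iota m (N - n + 2)).

(* M_N^{(m)}(w) = max_{1 <= n <= N} {n-1 : w \in H_{m,n}^{(N)}} (0 if N = 0) *)
Definition longest_switches {T : Type} {R : realType} (X : nat -> T -> R)
  (m N : nat) (w : T) : nat :=
  \max_(1 <= n < N.+1 | inH X m n N w) n.-1.

Definition M {T : Type} {R : realType} (X : nat -> T -> R) (N : nat) (w : T)
  : nat := longest_switches X 1 N w.

Definition logb {R : realType} (b x : R) : R := ln x / ln b.

(* Main.v *)
Require Import Defs.
From HB Require Import structures.
From mathcomp Require Import all_boot all_order all_algebra.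
From mathcomp Require Import all_classical all_reals all_analysis.
From mathcomp Require Import ring lra zify.
Import Order.TTheory GRing.Theory Num.Theory.
Local Open Scope classical_set_scope.
Local Open Scope ring_scope.
Definition wb {R : realType} (p : R) (b : bool) : R := if b then p else 1 - p.
Fixpoint enumb (n : nat) : seq (seq bool) :=
  if n is n'.+1 then [seq true :: s | s <- enumb n'] ++ [seq false :: s | s <- enumb n']
  else [:: [::]].
Definition wt {R : realType} (p : R) (s : seq bool) : R := \prod_(b <- s) wb p b.
Definition Sx {R : realType} (p : R) (n : nat) (F : seq bool -> R) : R :=
  \sum_(s <- enumb n) F s * wt p s.

Lemma enumb_size n s : s \in enumb n -> size s = n.
Proof.
elim: n s => [|n IH] s /=; first by rewrite inE => /eqP ->.
by rewrite mem_cat => /orP[] /mapP[t /IH <- ->].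
Qed.

Lemma enumb_mem s : s \in enumb (size s).
Proof.
elim: s => [|b s IH] /=; first by rewrite inE.
rewrite mem_cat; case: b; apply/orP; [left|right]; apply/mapP; by exists s.
Qed.

Lemma Sx0 {R : realType} (p : R) F : Sx p 0 F = F [::].
Proof. by rewrite /Sx /= big_seq1 /wt big_nil mulr1. Qed.

Lemma SxS {R : realType} (p : R) n F :
  Sx p n.+1 F = p * Sx p n (fun s => F (true :: s)) + (1 - p) * Sx p n (fun s => F (false :: s)).
Proof.
rewrite /Sx /= big_cat !big_map !mulr_sumr; congr (_ + _); apply: eq_bigr => s _;
by rewrite /wt big_cons /= mulrCA mulrA.
Qed.

Lemma Sx_ext {R : realType} (p : R) n F G :
  (forall s, size s = n -> F s = G s) -> Sx p n F = Sx p n G.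
Proof.
move=> FG; rewrite /Sx big_seq [RHS]big_seq; apply: eq_bigr => s /enumb_size /FG -> //.
Qed.

Lemma Sx_lin {R : realType} (p : R) n a b F G :
  Sx p n (fun s => a * F s + b * G s) = a * Sx p n F + b * Sx p n G.
Proof.
by rewrite /Sx !mulr_sumr -big_split; apply: eq_bigr => s _; rewrite mulrDl !mulrA.
Qed.

Lemma Sx_sum {R : realType} (p : R) n m (F : nat -> seq bool -> R) :
  Sx p n (fun s => \sum_(j < m) F j s) = \sum_(j < m) Sx p n (F j).
Proof.
rewrite /Sx exchange_big /=; apply: eq_bigr => s _; by rewrite mulr_suml.
Qed.

Lemma Sx_const {R : realType} (p : R) n c : Sx p n (fun _ => c) = c.
Proof.
elim: n c => [|n IH] c; first by rewrite Sx0.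
by rewrite SxS !IH; ring.
Qed.

Lemma wt_ge0 {R : realType} (p : R) s : 0 <= p <= 1 -> 0 <= wt p s.
Proof.
move=> /andP[p0 p1]; rewrite /wt; apply: prodr_ge0 => b _; rewrite /wb; case: b => //.
by rewrite subr_ge0.
Qed.

Lemma Sx_le {R : realType} (p : R) n F G : 0 <= p <= 1 ->
  (forall s, size s = n -> F s <= G s) -> Sx p n F <= Sx p n G.
Proof.
move=> hp FG; rewrite /Sx big_seq [leRHS]big_seq; apply: ler_sum => s /enumb_size /FG h.
by apply: ler_wpM2r => //; exact: wt_ge0.
Qed.

Lemma Sx_ge0 {R : realType} (p : R) n F : 0 <= p <= 1 ->
  (forall s, size s = n -> 0 <= F s) -> 0 <= Sx p n F.
Proof.
move=> hp FG; rewrite -(Sx_const p n 0); exact: Sx_le.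
Qed.

Lemma Sx_take {R : realType} (p : R) m k F :
  Sx p (m + k) (fun s => F (take m s)) = Sx p m F.
Proof.
elim: m F => [|m IH] F.
  by rewrite add0n Sx0 (@Sx_ext _ p _ _ (fun _ => F [::])) ?Sx_const // => s _; rewrite take0.
by rewrite addSn !SxS /= (IH (fun s => F (true :: s))) (IH (fun s => F (false :: s))).
Qed.

Lemma Sx_drop {R : realType} (p : R) m k F :
  Sx p (m + k) (fun s => F (drop m s)) = Sx p k F.
Proof.
elim: m => [|m IH]; first by rewrite add0n; apply: Sx_ext => s _; rewrite drop0.
by rewrite addSn SxS /= IH; ring.
Qed.

Lemma Sx_cat {R : realType} (p : R) m k F G :
  Sx p (m + k) (fun s => F (take m s) * G (drop m s)) = Sx p m F * Sx p k G.
Proof.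
elim: m F => [|m IH] F.
  rewrite add0n Sx0 (@Sx_ext _ p _ _ (fun s => F [::] * G s + 0 * G s)).
    by rewrite Sx_lin; ring.
  by move=> s _; rewrite take0 drop0 mul0r addr0.
rewrite addSn !SxS /= (IH (fun s => F (true :: s))) (IH (fun s => F (false :: s))).
ring.
Qed.
Local Open Scope nat_scope.
Fixpoint altb (b : bool) (t : seq bool) : bool :=
  if t is c :: t' then (c == b) && altb (~~ b) t' else true.
Definition dbl (b : bool) (u : seq bool) : bool :=
  if u is c :: u' then (c == b) && altb b u' else false.
Definition win (t : seq bool) (j n : nat) : bool :=
  let u := take n (drop j t) in (size u == n) && (altb true u || altb false u).
Definition haswin (t : seq bool) (n : nat) : bool :=
  has (fun j => win t j n) (iota 0 (size t).+1).

Lemma altb_nth b u k : altb b u -> k.+1 < size u -> nth false u k != nth false u k.+1.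
Proof.
elim: u b k => [|c u IH] b k //=; case/andP => /eqP -> hu.
case: k => [|k] /=.
  case: u hu {IH} => [|c' u'] //= /andP[/eqP -> _] _; by case: b.
by rewrite ltnS => hk; apply: IH hu hk.
Qed.

Lemma win_size t j n : win t j n -> j + n <= size t \/ n = 0%N.
Proof.
rewrite /win => /andP[/eqP hs _]; rewrite size_take size_drop in hs.
case: n hs => [|n] hs; [by right|left].
move: hs; rewrite /minn; case: ltnP; lia.
Qed.

Lemma win_nth t j n k : win t j n -> k.+1 < n ->
  nth false t (j + k) != nth false t (j + k).+1.
Proof.
rewrite /win => /andP[/eqP hs ha] hk.
have : nth false (take n (drop j t)) k != nth false (take n (drop j t)) k.+1.
  by case/orP: ha => ha; apply: altb_nth ha _; rewrite hs.
rewrite !nth_take // ?(ltn_trans _ hk) // !nth_drop; by rewrite addnS.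
Qed.

Lemma haswinP t n : (0 < n)%N -> reflect (exists j, win t j n) (haswin t n).
Proof.
move=> n0; apply: (iffP hasP) => [[j _ h]|[j h]]; first by exists j.
exists j => //; rewrite mem_iota /= add0n ltnS.
case: (@win_size t j n h) => [h'|e]; [lia | by rewrite e in n0].
Qed.

Lemma win_take t m j n : win (take m t) j n -> win t j n.
Proof.
move=> h; move: (h); rewrite /win => /andP[/eqP hs ha].
case: n hs ha h => [|n] hs ha h; first by rewrite /win !take0.
have hjm : j + n.+1 <= m.
  move: hs; rewrite size_take_min size_drop size_take_min; lia.
rewrite /win; suff -> : take n.+1 (drop j t) = take n.+1 (drop j (take m t)) by rewrite hs eqxx.
rewrite !take_drop -take_min; congr (drop j (take _ t)); apply/esym/minn_idPl; lia.
Qed.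

Lemma win_drop t m j n : win (drop m t) j n = win t (m + j) n.
Proof. by rewrite /win drop_drop addnC. Qed.

Lemma haswin_take t m n : (0 < n)%N -> haswin (take m t) n -> haswin t n.
Proof.
move=> n0 /(haswinP _ _ n0) [j /win_take h]; apply/haswinP => //; by exists j.
Qed.

Lemma haswin_drop t m n : (0 < n)%N -> haswin (drop m t) n -> haswin t n.
Proof.
move=> n0 /(haswinP _ _ n0) [j h]; rewrite win_drop in h; apply/haswinP => //; by exists (m + j)%N.
Qed.

Definition Ev (t : seq bool) (n j : nat) : bool :=
  if j is j'.+1 then
    let u := take n.+1 (drop j' t) in (size u == n.+1) && (dbl true u || dbl false u)
  else win t 0 n.

Lemma Ev_win t n j : Ev t n j -> win t j n.
Proof.
case: j => [//|j] /=; move=> /andP[/eqP hs hd].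
have hj : j < size t.
  by move: hs; rewrite size_take size_drop /minn; case: ltnP; lia.
move: hs hd; rewrite (drop_nth false hj) /= => /eqP; rewrite eqSS => /eqP hs.
rewrite /win hs eqxx /=.
by case/orP => /andP[_ ->]; rewrite ?orbT.
Qed.

Lemma Ev_nth t n j : 0 < n -> Ev t n j.+1 -> nth false t j = nth false t j.+1.
Proof.
case: n => [//|n] _ /= /andP[/eqP hs hd].
have hj1 : j.+1 < size t.
  by move: hs; rewrite size_take_min size_drop; lia.
have hj : j < size t by lia.
move: hd; rewrite (drop_nth false hj) (drop_nth false hj1) /=.
case/orP => /andP[/eqP -> /andP[/eqP -> _]] //.
Qed.

Lemma Ev_disj t n i j : i < j -> j < n -> Ev t n i -> Ev t n j -> False.
Proof.
move=> ij jn /Ev_win hi; case: j ij jn => [//|j] ij jn.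
have n0 : 0 < n by lia.
move=> /(Ev_nth _ _ _ n0) e.
have := @win_nth t i n (j - i)%N hi; rewrite subnKC; last by lia.
rewrite e eqxx => h; suff : false by []; apply: h; lia.
Qed.

Local Open Scope ring_scope.
Lemma sum_Ev {R : realType} t n : (0 < n)%N ->
  \sum_(j < n) ((Ev t n j)%:R : R) <= (haswin t n)%:R.
Proof.
move=> n0; case: (pickP (fun j : 'I_n => Ev t n j)) => [j0 H0|none].
  rewrite (bigD1 j0) //= big1 ?H0.
    have -> : haswin t n by apply/haswinP => //; exists j0; exact: Ev_win.
    by rewrite addr0.
  move=> i /eqP neq; case Hi: (Ev t n i) => //; exfalso.
  have : (i : nat) <> j0 by move=> e; apply: neq; apply: val_inj.
  case: (ltngtP i j0) => // h _.
    exact: (@Ev_disj t n i j0 h (ltn_ord j0) Hi H0).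
  exact: (@Ev_disj t n j0 i h (ltn_ord i) H0 Hi).
rewrite big1 ?ler0n // => i _; by rewrite none.
Qed.
Definition aa {R : realType} (p : R) b n := Sx p n (fun u => (altb b u)%:R).

Lemma Sx_zero {R : realType} (p : R) n : Sx p n (fun _ => 0) = 0.
Proof. exact: Sx_const. Qed.

Lemma aa_S {R : realType} (p : R) b n : aa p b n.+1 = wb p b * aa p (~~ b) n.
Proof.
rewrite /aa SxS /=; case: b => /=; rewrite Sx_const (_ : (false%:R : R) = 0) //.
  by rewrite mulr0 addr0.
by rewrite mulr0 add0r.
Qed.

Lemma aa_ge0 {R : realType} (p : R) b n : 0 <= p <= 1 -> 0 <= aa p b n.
Proof. move=> hp; apply: Sx_ge0 => // s _; exact: ler0n. Qed.

Lemma aa_0 {R : realType} (p : R) b : aa p b 0 = 1.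
Proof. by rewrite /aa Sx0. Qed.

Lemma aa_key {R : realType} (p : R) n : 0 < p < 1 ->
  (Num.sqrt (p * (1 - p))) ^+ n <= p * aa p true n + (1 - p) * aa p false n.
Proof.
move=> /andP[p0 p1].
set r := Num.sqrt (p * (1 - p)).
have pq0 : 0 <= p * (1 - p) by apply: mulr_ge0; lra.
have r2 : r ^+ 2 = p * (1 - p) by rewrite /r sqr_sqrtr.
have r0 : 0 <= r by rewrite /r sqrtr_ge0.
suff : r ^+ n <= p * aa p true n + (1 - p) * aa p false n /\
       r ^+ n.+1 <= p * aa p true n.+1 + (1 - p) * aa p false n.+1 by case.
elim: n => [|n [IH1 IH2]].
  rewrite !aa_S !aa_0 /wb /= expr0 expr1; split; first lra.
  have h : (p - 1/2) ^+ 2 >= 0 by exact: sqr_ge0.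
  nra.
split => //.
have e : forall b, aa p b n.+2 = p * (1 - p) * aa p b n.
  by move=> b; rewrite !aa_S negbK /wb; case: b => /=; ring.
rewrite !e.
have -> : r ^+ n.+2 = p * (1 - p) * r ^+ n by rewrite -r2 -exprD.
rewrite (_ : p * (p * (1 - p) * aa p true n) + (1 - p) * (p * (1 - p) * aa p false n)
  = p * (1 - p) * (p * aa p true n + (1 - p) * aa p false n)); last by ring.
exact: ler_wpM2l.
Qed.

Lemma natr_negb {R : realType} (b : bool) : ((~~ b)%:R : R) = 1 - b%:R.
Proof. by case: b => /=; rewrite ?subrr ?subr0. Qed.

Lemma Ev_prob {R : realType} (p : R) n j : 0 < p < 1 -> (0 < n)%N -> (j < n)%N ->
  (Num.sqrt (p * (1 - p))) ^+ n <= Sx p (n + n.-1) (fun t => (Ev t n j)%:R).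
Proof.
move=> hp n0 jn; have hp' : 0 <= p <= 1 by case/andP: hp => *; apply/andP; split; lra.
apply: (le_trans (aa_key p n hp)).
case: j jn => [|j] jn.
  pose F := fun u => ((size u == n) && (altb true u || altb false u))%:R : R.
  rewrite (@Sx_ext _ p _ _ (fun t => F (take n t))); last first.
    by move=> s _; rewrite /F /= /win drop0.
  rewrite (@Sx_take _ p n n.-1 F) /F (@Sx_ext _ p _ _ (fun u => 1 * (altb true u)%:R + 1 * (altb false u)%:R)); last first.
    move=> s hs; rewrite hs eqxx /= !mul1r; case: s hs => [|c s] hs; first by rewrite -hs in n0.
    by clear hs; case: c => /=; rewrite ?andbF ?orbF ?addr0 ?add0r.
  rewrite Sx_lin !mul1r -/(aa p true n) -/(aa p false n).
  have := aa_ge0 p true n hp'; have := aa_ge0 p false n hp'; case/andP: hp => *; nra.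
have -> : (n + n.-1 = j + (n.+1 + (n.-1 - j.+1)))%N by lia.
pose F := fun u => ((size u == n.+1) && (dbl true u || dbl false u))%:R : R.
rewrite (@Sx_drop _ p j _ (fun s => F (take n.+1 s))).
rewrite (@Sx_take _ p n.+1 _ F) /F (@Sx_ext _ p _ _ (fun u => 1 * (dbl true u)%:R + 1 * (dbl false u)%:R)); last first.
  move=> s hs; rewrite hs eqxx /= !mul1r; case: s hs => [|c s] hs //.
  by clear hs; case: c => /=; rewrite ?andbF ?orbF ?addr0 ?add0r.
rewrite Sx_lin !mul1r !SxS /= !Sx_const (_ : (false%:R : R) = 0) //.
by rewrite /aa !mulr0 addr0 add0r.
Qed.

Lemma block_bound {R : realType} (p : R) n : 0 < p < 1 -> (0 < n)%N ->
  Sx p (n + n.-1) (fun t => (~~ haswin t n)%:R) <= 1 - n%:R * (Num.sqrt (p * (1 - p))) ^+ n.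
Proof.
move=> hp n0; have hp' : 0 <= p <= 1 by case/andP: hp => *; apply/andP; split; lra.
pose G := fun t => \sum_(j < n) ((Ev t n j)%:R : R).
have h1 : Sx p (n + n.-1) (fun t => (~~ haswin t n)%:R) <=
          Sx p (n + n.-1) (fun t => 1 * (fun _ => 1) t + (-1) * G t).
  apply: Sx_le => // t _; rewrite natr_negb mul1r mulN1r lerB //; exact: sum_Ev.
apply: (le_trans h1); rewrite Sx_lin Sx_const /G (@Sx_sum _ p _ n (fun j t => (Ev t n j)%:R)) mul1r mulN1r lerB //.
have -> : n%:R * Num.sqrt (p * (1 - p)) ^+ n = \sum_(j < n) Num.sqrt (p * (1 - p)) ^+ n.
  by rewrite sumr_const card_ord mulr_natl.
by apply: ler_sum => j _; apply: Ev_prob.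
Qed.

Lemma natr_b_le1 {R : realType} (b : bool) : (b%:R : R) <= 1.
Proof. by case: b => /=; rewrite ?ler01 ?lexx. Qed.

Lemma nowin_split {R : realType} t L n : (0 < n)%N ->
  ((~~ haswin t n)%:R : R) <= (~~ haswin (take L t) n)%:R * (~~ haswin (drop L t) n)%:R.
Proof.
move=> n0; case h: (haswin t n) => /=; first by apply: mulr_ge0; exact: ler0n.
have -> : haswin (take L t) n = false.
  by apply/negbTE/negP => /(haswin_take _ _ _ n0); rewrite h.
have -> : haswin (drop L t) n = false.
  by apply/negbTE/negP => /(haswin_drop _ _ _ n0); rewrite h.
by rewrite mulr1.
Qed.

Lemma blocks {R : realType} (p : R) n L K : 0 < p < 1 -> (0 < n)%N ->
  Sx p (K * L) (fun t => (~~ haswin t n)%:R) <= (Sx p L (fun t => (~~ haswin t n)%:R)) ^+ K.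
Proof.
move=> hp n0; have hp' : 0 <= p <= 1 by case/andP: hp => *; apply/andP; split; lra.
elim: K => [|K IH]; first by rewrite mul0n Sx0 expr0 natr_b_le1.
rewrite mulSn exprS.
pose f := fun u => ((~~ haswin u n)%:R : R).
apply: (le_trans (@Sx_le _ p _ _ (fun t => f (take L t) * f (drop L t)) hp' _)).
  by move=> s _; exact: nowin_split.
rewrite (@Sx_cat _ p L (K * L) f f); apply: ler_wpM2l => //; apply: Sx_ge0 => // s _; exact: ler0n.
Qed.

Lemma nowin_exp {R : realType} (p : R) n T : 0 < p < 1 -> (0 < n)%N ->
  Sx p T (fun t => (~~ haswin t n)%:R) <=
  expR (- (n%:R * (Num.sqrt (p * (1 - p))) ^+ n) * (T %/ (n + n.-1))%:R).
Proof.
move=> hp n0; have hp' : 0 <= p <= 1 by case/andP: hp => *; apply/andP; split; lra.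
set L := (n + n.-1)%N; set K := (T %/ L)%N.
set x := n%:R * Num.sqrt (p * (1 - p)) ^+ n.
have hKL : (K * L <= T)%N by exact: leq_divM.
pose f := fun u => ((~~ haswin u n)%:R : R).
have h1 : Sx p T (fun t => (~~ haswin t n)%:R) <= Sx p T (fun t => f (take (K * L) t)).
  apply: Sx_le => // t _; rewrite /f; case h: (haswin (take (K * L) t) n) => /=.
    by move: (haswin_take _ _ _ n0 h) => ->.
  exact: natr_b_le1.
apply: (le_trans h1).
rewrite -(subnKC hKL) (@Sx_take _ p (K * L) _ f) /f.
apply: (le_trans (blocks _ _ _ _ hp n0)).
have b0 : 0 <= Sx p L (fun t => (~~ haswin t n)%:R) by apply: Sx_ge0 => // s _; exact: ler0n.
have b1 := block_bound p n hp n0.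
have b2 : 0 <= 1 - x by exact: le_trans b0 b1.
apply: (le_trans (lerXn2r K _ _ b1)); rewrite ?nnegrE //.
rewrite (expRM_natr K (- x)); apply: lerXn2r; rewrite ?nnegrE ?expR_ge0 //.
by have := expR_ge1Dx (- x); rewrite addrC.
Qed.
Definition bits {R : realType} {T : Type} (X : nat -> T -> R) (m : nat) (w : T) : seq bool :=
  [seq X i.+1 w == 1 | i <- iota 0 m].
Definition cyl {R : realType} {T : Type} (X : nat -> T -> R) (s : seq bool) : set T :=
  \bigcap_(i in [set` iota 1 (size s)]) (X i @^-1` [set ((nth false s i.-1)%:R : R)]).
Definition Gset {R : realType} {T : Type} (X : nat -> T -> R) (m : nat) (g : pred (seq bool)) : set T :=
  \big[setU/set0]_(s <- enumb m | g s) cyl X s.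

Lemma size_bits {R : realType} {T : Type} (X : nat -> T -> R) m w : size (bits X m w) = m.
Proof. by rewrite size_map size_iota. Qed.

Lemma cyl_meas {R : realType} {d} {T : measurableType d} (X : nat -> T -> R) s :
  (forall i, (0 < i)%N -> measurable_fun setT (X i)) -> measurable (cyl X s).
Proof.
move=> Xm; apply: bigcap_measurableType => i /=; rewrite mem_iota => /andP[i0 _].
rewrite -[X in measurable X]setTI; apply: (Xm i i0) => //; exact: measurable_set1.
Qed.

Lemma wt_iota {R : realType} (p : R) s :
  wt p s = \prod_(i <- iota 1 (size s)) wb p (nth false s i.-1).
Proof.
rewrite /wt (big_nth false) /index_iota subn0 (iotaDl 1 0) big_map.
by apply: eq_bigr.
Qed.

Lemma cyl_prob {R : realType} {d} {T : measurableType d} (P : probability T R)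
  (X : nat -> T -> R) (p : R) s :
  (forall i, (0 < i)%N -> P (X i @^-1` [set 1]) = p%:E) ->
  (forall i, (0 < i)%N -> P (X i @^-1` [set 0]) = (1 - p)%:E) ->
  mutually_independent_rvs P X ->
  P (cyl X s) = (wt p s)%:E.
Proof.
move=> X1 X0 Xind.
have hall : all (fun i => 0 < i)%N (iota 1 (size s)).
  by apply/allP => i; rewrite mem_iota => /andP[].
have hB : forall i, measurable ([set ((nth false s i.-1)%:R : R)]).
  by move=> i; exact: measurable_set1.
rewrite /cyl (Xind _ _ (iota_uniq _ _) hall hB).
rewrite wt_iota -prodEFin big_seq [RHS]big_seq; apply: eq_bigr => i.
rewrite mem_iota => /andP[i0 _]; rewrite /wb; case: (nth false s i.-1) => /=.
  by rewrite X1.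
by rewrite X0.
Qed.

Lemma meas_bigU_le {R : realType} {d} {T : measurableType d} (P : probability T R)
  (I : Type) (l : seq I) (Q : pred I) (F : I -> set T) :
  (forall i, measurable (F i)) ->
  (P (\big[setU/set0]_(i <- l | Q i) F i) <= \sum_(i <- l | Q i) P (F i))%E.
Proof.
move=> Fm; elim: l => [|i l IH]; first by rewrite !big_nil measure0.
rewrite !big_cons; case: (Q i) => //.
apply: (le_trans (measureU2 _ _ _)) => //; first exact: bigsetU_measurable.
exact: leeD.
Qed.

Lemma Gset_meas {R : realType} {d} {T : measurableType d} (X : nat -> T -> R) m g :
  (forall i, (0 < i)%N -> measurable_fun setT (X i)) -> measurable (Gset X m g).
Proof. move=> Xm; apply: bigsetU_measurable => s _; exact: cyl_meas. Qed.

Lemma Gset_prob {R : realType} {d} {T : measurableType d} (P : probability T R)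
  (X : nat -> T -> R) (p : R) m g :
  (forall i, (0 < i)%N -> measurable_fun setT (X i)) ->
  (forall i, (0 < i)%N -> P (X i @^-1` [set 1]) = p%:E) ->
  (forall i, (0 < i)%N -> P (X i @^-1` [set 0]) = (1 - p)%:E) ->
  mutually_independent_rvs P X ->
  (P (Gset X m g) <= (Sx p m (fun s => (g s)%:R))%:E)%E.
Proof.
move=> Xm X1 X0 Xind.
apply: (le_trans (@meas_bigU_le _ _ _ P _ (enumb m) g (cyl X) _)).
  by move=> s; exact: cyl_meas.
rewrite (eq_bigr (fun s => (wt p s)%:E)); last by move=> s _; exact: cyl_prob.
rewrite sumEFin lee_fin /Sx big_mkcond /=; apply: ler_sum => s _.
by case: (g s); rewrite ?mul1r ?mul0r.
Qed.

Lemma bigU_mem {T : Type} (I : eqType) (l : seq I) (Q : pred I) (F : I -> set T) i w :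
  i \in l -> Q i -> F i w -> (\big[setU/set0]_(j <- l | Q j) F j) w.
Proof.
elim: l => [//|j l IH]; rewrite inE big_cons => /orP[/eqP <-|il] Qi Fi.
  by rewrite Qi; left.
case: (Q j); [right|]; exact: IH.
Qed.

Lemma Gset_mem {R : realType} {T : Type} (X : nat -> T -> R) m (g : pred (seq bool)) w :
  (forall i, (0 < i)%N -> X i w = 0 \/ X i w = 1) -> g (bits X m w) -> Gset X m g w.
Proof.
move=> Xb gb; apply: (@bigU_mem _ _ (enumb m) g (cyl X) (bits X m w) w) => //.
  by rewrite -{2}(size_bits X m w); exact: enumb_mem.
move=> i /=; rewrite size_bits mem_iota => /andP[i0 im].
rewrite /bits (nth_map 0%N); last by rewrite size_iota; lia.
rewrite nth_iota; last by lia.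
rewrite add0n prednK //.
by case: (Xb i i0) => ->; rewrite ?eqxx //= (_ : (0 : R) == 1 = false) // eq_sym oner_eq0.
Qed.
Lemma term_one {R : realType} (a b : R) : (a = 0 \/ a = 1) -> (b = 0 \/ b = 1) ->
  (a == 1) != (b == 1) -> (1 - a) * b + a * (1 - b) = 1.
Proof.
have h10 : ((1 : R) == 0) = false by rewrite oner_eq0.
have h01 : ((0 : R) == 1) = false by rewrite eq_sym oner_eq0.
by case=> ->; case=> ->; rewrite ?eqxx ?h01 //= => _; ring.
Qed.

Lemma M_ge {R : realType} {T : Type} (X : nat -> T -> R) w n m N :
  (forall i, (0 < i)%N -> X i w = 0 \/ X i w = 1) -> (0 < n)%N ->
  haswin (bits X m w) n -> (m <= N)%N -> (n.-1 <= M X N w)%N.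
Proof.
move=> Xb n0 /(haswinP _ _ n0) [j hw] mN.
have hjn : (j + n <= m)%N.
  by case: (@win_size _ j n hw) => [|e]; rewrite ?size_bits //; rewrite e in n0.
have hin : inH X 1 n N w.
  apply/hasP; exists j.+1; first by rewrite mem_iota; lia.
  rewrite /switches.
  rewrite (@eq_big_nat _ _ _ _ _ _ (fun _ => 1)); last first.
    move=> i /andP[i1 i2].
    have hk : ((i - j.+2).+1 < n)%N by lia.
    have := @win_nth _ _ _ _ hw hk.
    have e1 : (j + (i - j.+2) = i.-2)%N by lia.
    rewrite e1 /bits (nth_map 0%N); last by rewrite size_iota; lia.
    rewrite (nth_map 0%N); last by rewrite size_iota; lia.
    rewrite !nth_iota; try lia.
    rewrite !add0n (_ : i.-2.+1 = i.-1); last by lia.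
    rewrite (_ : i.-1.+1 = i); last by lia.
    apply: term_one; apply: Xb; lia.
  by rewrite sumr_const_nat (_ : (n + j.+1 - j.+2 = n.-1)%N) //; lia.
rewrite /M /longest_switches.
apply: (@leq_bigmax_seq _ (index_iota 1 N.+1) (fun n => inH X 1 n N w) predn n) => //.
rewrite mem_index_iota; lia.
Qed.
Lemma ln2_ge {R : realType} : 1 / 2 <= ln (2 : R).
Proof.
have := @le_ln1Dx R (- (1 / 2)); rewrite (_ : 1 + - (1/2) = (2 : R)^-1); last by field.
rewrite lnV ?posrE // => h; have : -1 < - (1 / 2 : R) by lra.
by move=> /h; lra.
Qed.

Definition Tn {R : realType} (lam eps : R) (n : nat) : nat :=
  Num.truncn (lam ^+ n * (2 * expR (eps * ln lam) * ln (n.-1)%:R)).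

Definition xexpr {R : realType} (lam eps : R) (N : nat) : R :=
  logb lam N%:R - logb lam (logb lam (logb lam N%:R))
                + logb lam (logb lam (expR 1)) - logb lam 2 - 1 - eps.

Lemma Tn_le {R : realType} (lam eps : R) n N : 2 <= lam -> 0 < eps ->
  (3 <= n)%N -> (0 < N)%N -> ln lam * lam <= ln N%:R ->
  (n.-1)%:R <= xexpr lam eps N -> (Tn lam eps n <= N)%N.
Proof.
move=> lam2 eps0 n3 N0 hN hx.
have n1 : (2 : R) <= (n.-1)%:R by rewrite ler_nat; clear -n3; lia.
have n0 : (0 < n)%N by clear -n3; lia.
have lam0 : 0 < lam by lra.
set l := ln lam.
have l12 : 1 / 2 <= l.
  apply: le_trans ln2_ge _; rewrite /l ler_ln ?posrE //; lra.
have l0 : 0 < l by lra.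
have Npos : 0 < (N%:R : R) by rewrite ltr0n.
pose L1 := ln (N%:R : R) / l.
have L1ge : lam <= L1 by rewrite /L1 ler_pdivlMr // mulrC.
have L10 : 0 < L1 by lra.
pose L2 := ln L1 / l.
have L2ge : 1 <= L2.
  rewrite /L2 ler_pdivlMr // mul1r /l ler_ln ?posrE //.
have L20 : 0 < L2 by lra.
pose L3 := ln L2 / l.
have L3ge : 0 <= L3 by rewrite /L3 divr_ge0 ?ln_ge0 //; lra.
have cst : logb lam (logb lam (expR 1)) = - ln l / l.
  by rewrite /logb expRK -/l (_ : 1 / l = l^-1) ?lnV ?posrE ?mulNr //; rewrite div1r.
have Hx : xexpr lam eps N = L1 - L3 - ln l / l - ln 2 / l - 1 - eps.
  by rewrite /xexpr cst /logb -/l -/L1 -/L2 -/L3; rewrite mulNr.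
have l2 : 0 <= ln l + ln 2.
  rewrite -lnM ?posrE //; apply: ln_ge0; lra.
have hx2 : xexpr lam eps N <= L1 - 1.
  rewrite Hx; have : 0 <= (ln l + ln 2) / l by rewrite divr_ge0 //; lra.
  rewrite mulrDl; lra.
have L1n : (n.-1)%:R <= L1 by lra.
have key : l * (n.-1)%:R <= ln N%:R - ln L2 - ln l - ln 2 - l - eps * l.
  have e : l * (L1 - L3 - ln l / l - ln 2 / l - 1 - eps) =
    ln N%:R - ln L2 - ln l - ln 2 - l - eps * l by rewrite /L1 /L3; field; lra.
  by have := ler_wpM2l (ltW l0) hx; rewrite Hx e.
have e1 : l * L2 = ln L1 by rewrite /L2 mulrC -mulrA mulVf ?mulr1 //; lra.
clearbody L3 L2 L1.
have lamn : 0 < lam ^+ n by rewrite exprn_gt0.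
have hexp : 0 < expR (eps * l) by rewrite expR_gt0.
have key2 : ln (lam ^+ n * expR (eps * l) * 2 * l * L2) <= ln N%:R.
  rewrite !lnM ?posrE ?exprn_gt0 ?expR_gt0 ?mulr_gt0 //.
  rewrite lnXn // expRK -/l.
  have -> : l *+ n = l * (n.-1)%:R + l.
    have hn : (n%:R : R) = (n.-1)%:R + 1 by rewrite natr1 prednK.
    by rewrite -[l *+ n]mulr_natr hn mulrDr mulr1.
  lra.
move: key2; rewrite ler_ln ?posrE ?exprn_gt0 ?expR_gt0 ?mulr_gt0 // => key2.
have key3 : lam ^+ n * (2 * expR (eps * l) * ln (n.-1)%:R) <= N%:R.
  apply: le_trans key2.
  rewrite -!mulrA; apply: ler_wpM2l; first by rewrite exprn_ge0 //; lra.
  rewrite mulrCA; apply: ler_wpM2l; first by rewrite expR_ge0.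
  apply: ler_wpM2l => //; rewrite e1 ler_ln ?posrE //; lra.
rewrite -(ler_nat R); apply: le_trans key3.
rewrite /Tn truncn_le -/l; apply: mulr_ge0; first by rewrite exprn_ge0 //; lra.
apply: mulr_ge0; first by rewrite mulr_ge0 ?expR_ge0.
apply: ln_ge0; lra.
Qed.
Lemma r_facts {R : realType} (p : R) : 0 < p < 1 ->
  0 < Num.sqrt (p * (1 - p)) /\ Num.sqrt (p * (1 - p)) <= 1 / 2.
Proof.
move=> /andP[p0 p1]; have pq : 0 < p * (1 - p) by apply: mulr_gt0; lra.
split; first by rewrite sqrtr_gt0.
have r2 := sqr_sqrtr (ltW pq); have r0 := sqrtr_ge0 (p * (1 - p)).
move: r2 r0; set r := Num.sqrt _ => r2 r0.
have : (p - 1/2) ^+ 2 >= 0 by exact: sqr_ge0.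
rewrite expr2 in r2; nra.
Qed.

Lemma Pn_bound {R : realType} (p eps : R) n : 0 < p < 1 -> 0 < eps -> (3 <= n)%N ->
  expR (- (n%:R * Num.sqrt (p * (1 - p)) ^+ n) *
     (Tn (Num.sqrt (p * (1 - p)))^-1 eps n %/ (n + n.-1))%:R) <=
  expR 2 * expR (- expR (eps * ln (Num.sqrt (p * (1 - p)))^-1) * ln (n.-1)%:R).
Proof.
move=> hp eps0 n3; set r := Num.sqrt _; set lam := r^-1.
have hn1 : (n + n.-1 = (2 * n).-1)%N by clear -n3; lia.
have hL : (0 < n + n.-1)%N by clear -n3; lia.
have hlt := ltn_ceil (Tn lam eps n) hL.
have h2n : (n < 2 ^ n)%N by exact: ltn_expl.
have n1 : (2 : R) <= (n.-1)%:R by rewrite ler_nat; clear -n3; lia.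
move: (r_facts p hp); rewrite -/r => -[r0 r12].
rewrite -expRD ler_expR.
set a : R := n%:R; set K := (Tn lam eps n %/ (n + n.-1))%N.
set Rn := r ^+ n.
have Rn0 : 0 < Rn by rewrite exprn_gt0.
have aR : a * Rn <= 1.
  have h : Rn <= (1/2) ^+ n.
    rewrite /Rn; apply: lerXn2r; rewrite ?nnegrE; lra.
  have h2 : a <= 2 ^+ n by rewrite /a -natrX ler_nat ltnW.
  have e : (1/2) ^+ n * 2 ^+ n = 1 :> R.
    by rewrite -exprMn (_ : 1 / 2 * 2 = 1 :> R) ?expr1n //; field.
  have h0 : 0 <= (1/2 : R) ^+ n by rewrite exprn_ge0 //; lra.
  have : a * Rn <= a * (1/2) ^+ n by apply: ler_wpM2l => //; rewrite /a ler0n.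
  move=> h3; apply: le_trans h3 _; rewrite -[X in _ <= X]e [X in _ <= X]mulrC; exact: ler_wpM2r.
have a3 : 3 <= a by rewrite /a ler_nat.
set A := 2 * expR (eps * ln lam) * ln (n.-1)%:R.
have A0 : 0 <= A.
  rewrite /A; apply: mulr_ge0; first by rewrite mulr_ge0 ?expR_ge0.
  apply: ln_ge0; lra.
have lamn : lam ^+ n = Rn^-1 by rewrite /lam /Rn exprVn.
set t : R := (Tn lam eps n)%:R.
have ht : lam ^+ n * A - 1 < t.
  have := truncnS_gt (lam ^+ n * A); rewrite -/(Tn lam eps n) -/t -natr1; lra.
set k : R := K%:R.
have k0 : 0 <= k by rewrite /k ler0n.
have hk : t < (k + 1) * (2 * a - 1).
  rewrite /t /k /a (_ : 2 * n%:R - 1 = (n + n.-1)%:R :> R).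
    by rewrite natr1 -natrM ltr_nat.
  have hn : (n%:R : R) = (n.-1)%:R + 1 by rewrite natr1 prednK //; clear -n3; lia.
  rewrite natrD hn; ring.
have h1 : A - Rn < (k + 1) * (2 * a - 1) * Rn.
  have e : (lam ^+ n * A - 1) * Rn = A - Rn by rewrite lamn; field; lra.
  rewrite -e ltr_pM2r //; lra.
set u := (k + 1) * Rn.
have u0 : 0 <= u by rewrite /u mulr_ge0 //; lra.
have e2 : (k + 1) * (2 * a - 1) * Rn = 2 * (a * u) - u by rewrite /u; ring.
have e3 : a * Rn * k = a * u - a * Rn by rewrite /u; ring.
have e4 : 2 * expR (eps * ln lam) * ln (n.-1)%:R = A by [].
rewrite mulNr e3.
have RnL1 : Rn <= 1 by have := aR; nra.
suff : A / 2 - 2 <= a * u - a * Rn.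
  by rewrite /A; lra.
rewrite e2 in h1; lra.
Qed.
Lemma telesc {R : realType} (t : R) m : 0 < t -> (2 <= m)%N ->
  t * expR (- (1 + t) * ln m%:R) <= expR (- t * ln (m.-1)%:R) - expR (- t * ln m%:R).
Proof.
move=> t0 m2.
have m0 : (0 : R) < m%:R by rewrite ltr0n; clear -m2; lia.
have m10 : (0 : R) < (m.-1)%:R by rewrite ltr0n; clear -m2; lia.
have hm : (m.-1)%:R = m%:R - 1 :> R.
  have hn : (m%:R : R) = (m.-1)%:R + 1 by rewrite natr1 prednK //; clear -m2; lia.
  by rewrite hn addrK.
set a := ln (m%:R : R); set b := ln ((m.-1)%:R : R).
set E := expR (- t * a).
have E0 : 0 < E by rewrite expR_gt0.
have e1 : expR (- (1 + t) * a) = E / m%:R.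
  rewrite /E (_ : - (1 + t) * a = - t * a + - a); last by ring.
  by rewrite expRD expRN /a lnK ?posrE.
have e2 : expR (- t * b) = E * expR (t * (a - b)) by rewrite /E -expRD; congr expR; ring.
have hd : 1 / m%:R <= a - b.
  have h := @le_ln1Dx R (- (1 / m%:R)).
  have : -1 < - (1 / m%:R) :> R.
    rewrite ltrN2 ltr_pdivrMr // mul1r (_ : 1 = 1%:R) // ltr_nat; clear -m2; lia.
  move=> /h; rewrite (_ : 1 + - (1 / m%:R) = (m.-1)%:R / m%:R); last by rewrite hm; field; lra.
  rewrite ln_div ?posrE // -/a -/b; lra.
have h1 := expR_ge1Dx (t * (a - b)).
rewrite e1 e2.
have : E * (t * (1 / m%:R)) <= E * (t * (a - b)) by apply: ler_wpM2l; [lra | apply: ler_wpM2l; lra].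
have : E * (t * (a - b)) <= E * (expR (t * (a - b)) - 1) by apply: ler_wpM2l; lra.
move=> h2 h3; have e3 : t * (E / m%:R) = E * (t * (1 / m%:R)) by field; lra.
rewrite e3; apply: (le_trans h3); apply: (le_trans h2).
by rewrite mulrBr mulr1.
Qed.

Definition cc {R : realType} (s : R) (n : nat) : R :=
  if (n < 3)%N then 0 else expR (- s * ln (n.-1)%:R).

Lemma cc_ge0 {R : realType} (s : R) n : 0 <= cc s n.
Proof. by rewrite /cc; case: ifP => _ //; rewrite expR_ge0. Qed.

Lemma psum {R : realType} (s : R) N : 1 < s -> \sum_(0 <= n < N) (s - 1) * cc s n <= 1.
Proof.
move=> s1; set t := s - 1; have t0 : 0 < t by rewrite /t; lra.
pose G (N : nat) : R := if (N < 3)%N then 1 else expR (- t * ln (N.-2)%:R).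
have G0 : forall N, 0 <= G N by move=> M; rewrite /G; case: ifP => _; rewrite ?ler01 ?expR_ge0.
suff : \sum_(0 <= n < N) t * cc s n <= 1 - G N by have := G0 N; lra.
elim: N => [|N IH]; first by rewrite big_geq // /G /= subrr.
rewrite big_nat_recr //=.
case: (ltnP N 3) => hN.
  have -> : cc s N = 0 by rewrite /cc hN.
  rewrite mulr0 addr0; apply: (le_trans IH).
  rewrite /G; case: (ltnP N.+1 3) => h; first by rewrite (_ : (N < 3)%N) //; clear -h; lia.
  have -> : N = 2%N by clear -h hN; lia.
  by rewrite /= ln1 mulr0 expR0.
have -> : cc s N = expR (- (1 + t) * ln (N.-1)%:R).
  by rewrite /cc ltnNge hN /t /= (_ : 1 + (s - 1) = s) //; ring.
have hN1 : (2 <= N.-1)%N by clear -hN; lia.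
have h := @telesc _ t N.-1 t0 hN1.
have eG : G N = expR (- t * ln (N.-2)%:R) by rewrite /G ltnNge hN.
have eG1 : G N.+1 = expR (- t * ln (N.-1)%:R).
  rewrite /G ltnNge (_ : (3 <= N.+1)%N) //; clear -hN; lia.
rewrite eG1; rewrite eG in IH; lra.
Qed.

Lemma nneseries_ub {R : realType} (u : nat -> \bar R) (B : R) :
  (forall n, 0 <= u n)%E -> (forall N, \sum_(0 <= n < N) u n <= B%:E)%E ->
  (\sum_(n <oo) u n <= B%:E)%E.
Proof.
move=> u0 hB.
have nd : nondecreasing_seq (fun n => \sum_(0 <= i < n) u i)%E.
  by apply: ereal_nondecreasing_series => n _ _; exact: u0.
rewrite (cvg_lim _ (ereal_nondecreasing_cvgn nd)) //.
by apply: ub_ereal_sup => _ [n _ <-]; exact: hB.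
Qed.
Theorem theorem2p2 (R : realType) (d : measure_display) (T : measurableType d)
  (P : probability T R) (X : nat -> T -> R) (p : R)
  (hp0 : 0 < p) (hp1 : p < 1)
  (Xmeas : forall i, (0 < i)%N -> measurable_fun setT (X i))
  (X1 : forall i, (0 < i)%N -> P (X i @^-1` [set 1]) = p%:E)
  (X0 : forall i, (0 < i)%N -> P (X i @^-1` [set 0]) = (1 - p)%:E)
  (Xind : mutually_independent_rvs P X)
  (eps : R) (heps : 0 < eps) :
  let q := 1 - p in
  let lam := (Num.sqrt (p * q))^-1 in
  {ae P, forall w, exists N0 : nat, forall N : nat, (N0 <= N)%N ->
     Num.floor (logb lam N%:R - logb lam (logb lam (logb lam N%:R))
                + logb lam (logb lam (expR 1)) - logb lam 2 - 1 - eps)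
     <= (M X N w)%:Z}.
Proof.
move=> q lam.
have hp : 0 < p < 1 by rewrite hp0 hp1.
move: (r_facts p hp) => [r0 r12].
have hlam : lam = (Num.sqrt (p * (1 - p)))^-1 by [].
set r := Num.sqrt (p * (1 - p)) in r0 r12 hlam.
have lam2 : 2 <= lam.
  have e : r * lam = 1 by rewrite hlam mulfV //; lra.
  have : 0 < lam by rewrite hlam invr_gt0.
  nra.
set s := expR (eps * ln lam).
have s1 : 1 < s by rewrite /s expR_gt1; apply: mulr_gt0 => //; apply: ln_gt0; lra.
pose E n := if (n < 3)%N then set0 else Gset X (Tn lam eps n) (fun t => ~~ haswin t n).
have mE : forall n, measurable (E n).
  by move=> n; rewrite /E; case: ifP => _ //; exact: Gset_meas.
have PE : forall n, (P (E n) <= (expR 2 * cc s n)%:E)%E.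
  move=> n; rewrite /E /cc; case: ifP => hn.
    by rewrite measure0 mulr0.
  apply: (le_trans (Gset_prob P X p _ _ Xmeas X1 X0 Xind)); rewrite lee_fin.
  have n3 : (3 <= n)%N by rewrite leqNgt hn.
  apply: (le_trans (nowin_exp _ _ _ hp (ltn_trans _ n3))) => //.

  exact: (Pn_bound p eps n hp heps n3).
have hsum : (\sum_(n <oo) P (E n) < +oo)%E.
  apply: (le_lt_trans (@nneseries_ub _ (fun n => P (E n)) (expR 2 / (s - 1)) _ _)); last by rewrite ltry.
    by move=> n; exact: measure_ge0.
  move=> N; apply: (@le_trans _ _ (\sum_(0 <= n < N) (expR 2 * cc s n)%:E)%E).
    by apply: lee_sum => n _; exact: PE.
  rewrite sumEFin lee_fin.
  have e : \sum_(0 <= n < N) expR 2 * cc s n = expR 2 / (s - 1) * \sum_(0 <= n < N) (s - 1) * cc s n.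
    rewrite mulr_sumr; apply: eq_bigr => n _; field; lra.
  rewrite e -[leRHS]mulr1; apply: ler_wpM2l; last exact: psum.
  apply: divr_ge0; [exact: expR_ge0 | lra].
have hlim := @lim_sup_set_cvg0 _ _ _ P E mE hsum.
pose Z i := ~` (X i.+1 @^-1` [set 0] `|` X i.+1 @^-1` [set 1]).
have mX : forall i B, measurable B -> measurable (X i.+1 @^-1` B).
  by move=> i B mB; rewrite -[X in measurable X]setTI; exact: Xmeas.
have PZ : forall i, P (Z i) = 0%E.
  move=> i; rewrite /Z probability_setC; last by apply: measurableU; apply: mX; exact: measurable_set1.
  have hU : P (X i.+1 @^-1` [set 0] `|` X i.+1 @^-1` [set 1]) =
            (P (X i.+1 @^-1` [set 0%R]) + P (X i.+1 @^-1` [set 1%R]))%E.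
    apply: measureU; try by apply: mX; exact: measurable_set1.
    apply/seteqP; split => x //= [h0 h1]; move: h1; rewrite h0 => /esym/eqP.
    by rewrite oner_eq0.
  rewrite hU X0 // X1 // -EFinD (_ : 1 - p + p = 1); last by ring.
  by rewrite subrr.
have nZ : P.-negligible (\bigcup_i Z i).
  apply: negligible_bigcup => i; apply/negligibleP; last exact: PZ.
  by apply: measurableC; apply: measurableU; apply: mX; exact: measurable_set1.
have nL : P.-negligible (lim_sup_set E).
  apply/negligibleP => //; apply: bigcapT_measurable => n.
  by apply: bigcup_measurable => j _; exact: mE.
have nU := negligibleU nZ nL.
rewrite /prop_near1 /almost_everywhere /=.
rewrite /nbhs /=.
move: nU; apply: negligibleS.
move=> w nQ.
apply: contrapT => hn; apply: nQ.
move/not_orP: hn => [hZ hL].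
have Xb : forall i, (0 < i)%N -> X i w = 0 \/ X i w = 1.
  move=> [|i] // _; apply: contrapT => h; apply: hZ; exists i => //.
move/existsNP: hL => [m hm].
have hE : forall j, (m <= j)%N -> ~ E j w by move=> j mj Ej; apply: hm; exists j.
set n0 := maxn m 3.
have hwin : forall n, (n0 <= n)%N -> haswin (bits X (Tn lam eps n) w) n.
  move=> n hn; have n3 : (3 <= n)%N by move: hn; rewrite geq_max => /andP[].
  have hmn : (m <= n)%N by move: hn; rewrite geq_max => /andP[].
  have := hE n hmn; rewrite /E ifF; last by rewrite ltnNge n3.
  move=> nG; apply: contrapT => /negP hh; apply: nG; exact: Gset_mem.
pose N1 := (Num.truncn (expR (ln lam * lam))).+1.
exists (maxn N1 (Tn lam eps n0)) => N hN.
have hN1 : (N1 <= N)%N by move: hN; rewrite geq_max => /andP[].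
have hT0 : (Tn lam eps n0 <= N)%N by move: hN; rewrite geq_max => /andP[].
have N0 : (0 < N)%N by apply: leq_trans hN1.
have hlnN : ln lam * lam <= ln N%:R.
  have h1 := truncnS_gt (expR (ln lam * lam)).
  have h2 : (N1%:R : R) <= N%:R by rewrite ler_nat.
  rewrite -[X in X <= _]expRK ler_ln ?posrE ?expR_gt0 ?ltr0n //.
  by apply: ltW; apply: lt_le_trans h2.
have n03 : (3 <= n0)%N by rewrite leq_maxr.
change (Num.floor (xexpr lam eps N) <= (M X N w)%:Z).
case: (ltP (xexpr lam eps N) 0) => hx.
  have : Num.floor (xexpr lam eps N) < 0 by rewrite floor_lt0.
  move=> h; apply: (le_trans (ltW h)); by rewrite lez_nat.
have f0 : 0 <= Num.floor (xexpr lam eps N) by rewrite floor_ge0.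
set k := `|Num.floor (xexpr lam eps N)|%N.
have fk : Num.floor (xexpr lam eps N) = k%:Z by rewrite /k gez0_abs.
have hk : (k%:R : R) <= xexpr lam eps N.
  by have := floor_le (xexpr lam eps N); rewrite fk pmulrn.
rewrite fk lez_nat.
case: (leqP n0 k.+1) => hn.
  have n3 : (3 <= k.+1)%N by apply: leq_trans hn.
  have hT : (Tn lam eps k.+1 <= N)%N.
    by apply: (Tn_le lam eps k.+1 N lam2 heps n3 N0 hlnN).
  exact: (M_ge X w k.+1 (Tn lam eps k.+1) N Xb (ltn0Sn k) (hwin _ hn) hT).
have n00 : (0 < n0)%N by apply: leq_trans n03.
have h := M_ge X w n0 (Tn lam eps n0) N Xb n00 (hwin _ (leqnn _)) hT0.
apply: leq_trans h; rewrite -ltnS prednK //.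
exact: ltnW hn.
Qed.
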